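(* Let $0<p_0<1$, $\epsilon>0$, $\omega\ge0$, $\gamma_0\ge\gamma\ge0$. Let $\omega(t),\epsilon_x(t),\epsilon_y(t),\delta\gamma_t$ be real-valued functions of time with $|\omega(t)|\le\omega$, $\sqrt{\epsilon_x^2(t)+\epsilon_y^2(t)}\le\epsilon$, $|\delta\gamma_t|\le\gamma$, and set $H(t)=[1+\omega(t)]I_z+\epsilon_x(t)I_x+\epsilon_y(t)I_y$, $\gamma_t=\gamma_0+\delta\gamma_t$. Let the qubit density matrix $\rho_t$ evolve according to $$\dot\rho_t=-i[H(t),\rho_t]+\gamma_t\Big(\sigma_-\rho_t\sigma_+-\tfrac12\sigma_+\sigma_-\rho_t-\tfrac12\rho_t\sigma_+\sigma_-\Big)$$ with $\rho_0=|0\rangle\langle0|$. Let $$T_a=\frac{2p_0}{\sqrt{4\epsilon^2+(\gamma_0+\gamma)^2}+(\gamma_0+\gamma)}.$$ Then for every $t\in[0,T_a]$, $\rho_t\in\mathcal{D}_a=\{\rho:\langle0|\rho|0\rangle\ge1-p_0\}$; equivalently, if a projective measurement of $\sigma_z$ is made at time $t$, the probability of failure $p=\langle1|\rho_t|1\rangle$ is at most $p_0$.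
   Context: $\sigma_x,\sigma_y,\sigma_z$ are the Pauli matrices $\begin{pmatrix}0&1\\1&0\end{pmatrix},\begin{pmatrix}0&-i\\i&0\end{pmatrix},\begin{pmatrix}1&0\\0&-1\end{pmatrix}$, $I_j=\frac12\sigma_j$, $\sigma_-=\frac12(\sigma_x-i\sigma_y)$, $\sigma_+=\frac12(\sigma_x+i\sigma_y)$, $[A,B]=AB-BA$. $|0\rangle=(1,0)^T$, $|1\rangle=(0,1)^T$ are the eigenvectors of $\sigma_z$ with eigenvalues $1,-1$. Units with $\hbar=1$. The probability of failure is the probability that a $\sigma_z$ measurement yields $|1\rangle$. *)

(* Defs.v *)
From Stdlib Require Import Reals.
From Coquelicot Require Import Coquelicot.
Open Scope R_scope.

(* 2x2 complex matrices, indexed by 0,1 (basis |0>, |1>);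
   only the indices 0 and 1 are ever used. *)
Definition mat := nat -> nat -> C.

Definition madd (A B : mat) : mat := fun i j => Cplus (A i j) (B i j).
Definition msub (A B : mat) : mat := fun i j => Cminus (A i j) (B i j).
Definition mscale (c : C) (A : mat) : mat := fun i j => Cmult c (A i j).
Definition mmul (A B : mat) : mat :=
  fun i j => Cplus (Cmult (A i 0%nat) (B 0%nat j)) (Cmult (A i 1%nat) (B 1%nat j)).
Definition comm (A B : mat) : mat := msub (mmul A B) (mmul B A).

Definition sx : mat := fun i j =>
  match i, j with 0, 1 | 1, 0 => RtoC 1 | _, _ => RtoC 0 end%nat.
Definition sy : mat := fun i j =>
  match i, j with 0, 1 => Copp Ci | 1, 0 => Ci | _, _ => RtoC 0 end%nat.
Definition sz : mat := fun i j =>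
  match i, j with 0, 0 => RtoC 1 | 1, 1 => RtoC (-1) | _, _ => RtoC 0 end%nat.

Definition Ix : mat := mscale (RtoC (1/2)) sx.
Definition Iy : mat := mscale (RtoC (1/2)) sy.
Definition Iz : mat := mscale (RtoC (1/2)) sz.
Definition sminus : mat := mscale (RtoC (1/2)) (msub sx (mscale Ci sy)).
Definition splus  : mat := mscale (RtoC (1/2)) (madd sx (mscale Ci sy)).

Definition ket0bra0 : mat := fun i j =>
  match i, j with 0, 0 => RtoC 1 | _, _ => RtoC 0 end%nat.

Definition Ham (om ex ey : R -> R) (t : R) : mat :=
  madd (mscale (RtoC (1 + om t)) Iz)
       (madd (mscale (RtoC (ex t)) Ix) (mscale (RtoC (ey t)) Iy)).

Definition dissip (rho : mat) : mat :=
  msub (msub (mmul (mmul sminus rho) splus)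
             (mscale (RtoC (1/2)) (mmul (mmul splus sminus) rho)))
       (mscale (RtoC (1/2)) (mmul rho (mmul splus sminus))).

Definition lindblad_rhs (om ex ey dgam : R -> R) (gamma0 t : R) (rho : mat) : mat :=
  madd (mscale (Copp Ci) (comm (Ham om ex ey t) rho))
       (mscale (RtoC (gamma0 + dgam t)) (dissip rho)).

Definition solves_master (om ex ey dgam : R -> R) (gamma0 : R) (rho : R -> mat) : Prop :=
  rho 0 = ket0bra0 /\
  (forall i j : nat, (i < 2)%nat -> (j < 2)%nat ->
     filterlim (fun t => Re (rho t i j)) (at_right 0) (locally (Re (rho 0 i j))) /\
     filterlim (fun t => Im (rho t i j)) (at_right 0) (locally (Im (rho 0 i j)))) /\
  (forall t : R, 0 < t -> forall i j : nat, (i < 2)%nat -> (j < 2)%nat ->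
     is_derive (fun s => Re (rho s i j)) t (Re (lindblad_rhs om ex ey dgam gamma0 t (rho t) i j)) /\
     is_derive (fun s => Im (rho s i j)) t (Im (lindblad_rhs om ex ey dgam gamma0 t (rho t) i j))).

Definition Ta (p0 eps gamma0 gamma : R) : R :=
  2 * p0 / (sqrt (4 * eps ^ 2 + (gamma0 + gamma) ^ 2) + (gamma0 + gamma)).

(* Main.v *)
Require Import Defs.
From Stdlib Require Import Reals Lra Lia.
From Coquelicot Require Import Coquelicot.
Open Scope R_scope.

Lemma cont_eps (f : R -> R) a : filterlim f (locally a) (locally (f a)) ->
  forall eta, 0 < eta -> exists delta, 0 < delta /\ forall s, Rabs (s - a) < delta -> Rabs (f s - f a) < eta.
Proof.
  intros H eta Heta.
  assert (HL : locally (f a) (fun y => Rabs (y - f a) < eta)).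
  { exists (mkposreal eta Heta). intros y Hy. exact Hy. }
  destruct (H _ HL) as [eps Heps]. exists eps. split. apply cond_pos.
  intros s Hs. apply (Heps s). exact Hs.
Qed.

Lemma rc_eps (f : R -> R) a : filterlim f (at_right a) (locally (f a)) ->
  forall eta, 0 < eta -> exists delta, 0 < delta /\ forall s, a < s < a + delta -> Rabs (f s - f a) < eta.
Proof.
  intros H eta Heta.
  assert (HL : locally (f a) (fun y => Rabs (y - f a) < eta)).
  { exists (mkposreal eta Heta). intros y Hy. exact Hy. }
  destruct (H _ HL) as [eps Heps]. exists eps. split. apply cond_pos.
  intros s Hs. apply (Heps s). 2: lra.
  change (Rabs (s - a) < eps). rewrite Rabs_right; lra.
Qed.

Definition RCe (f : R -> R) a := forall eta, 0 < eta -> exists delta, 0 < delta /\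
   forall s, a < s < a + delta -> Rabs (f s - f a) < eta.

Lemma deriv_RCe f a l : is_derive f a l -> RCe f a.
Proof.
  intros H eta Heta.
  assert (Hc : continuous f a) by (apply ex_derive_continuous; exists l; exact H).
  destruct (cont_eps f a Hc eta Heta) as [d [Hd Hd']]. exists d; split; auto.
  intros s Hs; apply Hd'. rewrite Rabs_right; lra.
Qed.

Lemma L0 (f df : R -> R) a b L : a < b ->
  (forall t, a < t <= b -> is_derive f t (df t)) ->
  (forall t, a < t <= b -> L <= df t) -> RCe f a ->
  L * (b - a) <= f b - f a.
Proof.
  intros Hab Hd HL Hrc.
  destruct (Rle_or_lt (L * (b - a)) (f b - f a)) as [H|H]; [exact H|exfalso].
  set (eta := L * (b - a) - (f b - f a)).
  assert (Heta : 0 < eta) by (unfold eta; lra).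
  destruct (Hrc (eta/2)) as [d [Hd0 Hd1]]; [lra|].
  set (s := a + Rmin (Rmin (d/2) ((b-a)/2)) (eta / (2 * (Rabs L + 1)))).
  assert (HA : 0 < Rabs L + 1) by (pose proof (Rabs_pos L); lra).
  assert (Hm1 : Rmin (Rmin (d/2) ((b-a)/2)) (eta / (2 * (Rabs L + 1))) <= Rmin (d/2) ((b-a)/2)) by apply Rmin_l.
  assert (Hm2 : Rmin (Rmin (d/2) ((b-a)/2)) (eta / (2 * (Rabs L + 1))) <= eta / (2 * (Rabs L + 1))) by apply Rmin_r.
  assert (Hm3 : Rmin (d/2) ((b-a)/2) <= d/2) by apply Rmin_l.
  assert (Hm4 : Rmin (d/2) ((b-a)/2) <= (b-a)/2) by apply Rmin_r.
  assert (Hpos : 0 < Rmin (Rmin (d/2) ((b-a)/2)) (eta / (2 * (Rabs L + 1)))).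
  { apply Rmin_glb_lt; [apply Rmin_glb_lt; lra|]. apply Rdiv_lt_0_compat; lra. }
  assert (Hs1 : a < s < a + d) by (unfold s; lra).
  assert (Hs2 : s < b) by (unfold s; lra).
  assert (HLs : L * (s - a) <= eta / 2).
  { assert (Hx : s - a <= eta / (2 * (Rabs L + 1))) by (unfold s; lra).
    assert (L * (s-a) <= Rabs L * (s - a)).
    { apply Rmult_le_compat_r; [lra| apply Rle_abs]. }
    assert (Rabs L * (s - a) <= Rabs L * (eta / (2 * (Rabs L + 1)))).
    { apply Rmult_le_compat_l; [apply Rabs_pos| lra]. }
    assert (Rabs L * (eta / (2 * (Rabs L + 1))) <= eta / 2).
    { unfold Rdiv. rewrite Rinv_mult. 
      assert (0 < / (Rabs L + 1)) by (apply Rinv_0_lt_compat; lra).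
      assert (Rabs L * / (Rabs L + 1) <= 1).
      { apply (Rmult_le_reg_r (Rabs L + 1)); [lra|]. rewrite Rmult_assoc, Rinv_l; lra. }
      nra. }
    lra. }
  pose proof (Hd1 s Hs1) as Hfs.
  destruct (MVT_gen f s b df) as [c [Hc Hmvt]].
  - intros x Hx. rewrite Rmin_left in Hx by lra. rewrite Rmax_right in Hx by lra.
    apply Hd; lra.
  - intros x Hx. rewrite Rmin_left in Hx by lra. rewrite Rmax_right in Hx by lra.
    apply continuity_pt_filterlim. apply (ex_derive_continuous (K:=R_AbsRing) (V:=R_NormedModule)). exists (df x). apply Hd; lra.
  - rewrite Rmin_left in Hc by lra. rewrite Rmax_right in Hc by lra.
    assert (L <= df c) by (apply HL; lra).
    assert (L * (b - s) <= df c * (b - s)) by (apply Rmult_le_compat_r; lra).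
    apply Rabs_def2 in Hfs. unfold eta in *. lra.
Qed.
Lemma RCe_opp f a : RCe f a -> RCe (fun t => - f t) a.
Proof. intros H eta He. destruct (H eta He) as [d [Hd Hd']]. exists d; split; auto.
  intros s Hs. replace (- f s - - f a) with (-(f s - f a)) by ring. rewrite Rabs_Ropp; auto. Qed.

Lemma L1 (f df : R -> R) M :
  (forall t, 0 < t -> is_derive f t (df t)) -> (forall t, 0 < t -> df t <= M) -> RCe f 0 ->
  forall t, 0 <= t -> f t <= f 0 + M * t.
Proof.
  intros Hd HM Hrc t Ht. destruct (Req_dec t 0) as [->|Hn]; [lra|].
  pose proof (L0 (fun t => - f t) (fun t => - df t) 0 t (-M)) as H.
  assert (-M * (t - 0) <= - f t - - f 0); [|lra].
  apply H; [lra| | |apply RCe_opp; auto].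
  - intros s Hs. apply (is_derive_opp f). apply Hd; lra.
  - intros s Hs. pose proof (HM s ltac:(lra)). lra.
Qed.

Lemma barrier (f df : R -> R) :
  (forall t, 0 < t -> is_derive f t (df t)) -> RCe f 0 -> 0 <= f 0 ->
  (forall t, 0 < t -> f t < 0 -> 0 <= df t) -> forall T, 0 <= T -> 0 <= f T.
Proof.
  intros Hd Hrc H0 Hneg T HT.
  destruct (Req_dec T 0) as [->|HTn]; [exact H0|].
  destruct (Rle_or_lt 0 (f T)) as [HfT|HfT]; [exact HfT|exfalso].
  set (E := fun t => 0 <= t <= T /\ 0 <= f t).
  assert (Hb : bound E) by (exists T; intros x [Hx _]; lra).
  assert (He : exists x, E x) by (exists 0; split; lra).
  destruct (completeness E Hb He) as [m [Hub Hlub]].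
  assert (Hm0 : 0 <= m) by (apply Hub; split; lra).
  assert (HmT : m <= T) by (apply Hlub; intros x [Hx _]; lra).
  assert (Hfm : 0 <= f m).
  { destruct (Req_dec m 0) as [->|Hmn]; [exact H0|].
    destruct (Rle_or_lt 0 (f m)) as [Hq|Hq]; [exact Hq|exfalso].
    assert (Hc : continuous f m).
    { apply (ex_derive_continuous (K:=R_AbsRing) (V:=R_NormedModule)). exists (df m). apply Hd; lra. }
    destruct (cont_eps f m Hc (- f m)) as [d [Hd0 Hd1]]; [lra|].
    assert (m <= m - d/2); [|lra].
    apply Hlub. intros x [Hx Hfx].
    destruct (Rle_or_lt x (m - d/2)) as [Q|Q]; [exact Q|exfalso].
    assert (x <= m) by (apply Hub; split; auto).
    assert (Rabs (f x - f m) < - f m) by (apply Hd1; rewrite Rabs_left1; lra).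
    apply Rabs_def2 in H1. lra. }
  assert (HmT' : m < T) by (destruct (Req_dec m T); [subst; lra| lra]).
  assert (Hrcm : RCe f m).
  { destruct (Req_dec m 0) as [->|Hmn]; [exact Hrc|]. apply (deriv_RCe f m (df m)). apply Hd; lra. }
  pose proof (L0 f df m T 0 HmT') as HL.
  assert (0 * (T - m) <= f T - f m); [|lra].
  apply HL; auto.
  - intros s Hs. apply Hd; lra.
  - intros s Hs. apply Hneg; [lra|].
    destruct (Rle_or_lt 0 (f s)) as [Q|Q]; [|exact Q].
    assert (s <= m) by (apply Hub; split; [lra|auto]). lra.
Qed.
Lemma RC_plus f g : filterlim f (at_right 0) (locally (f 0)) -> filterlim g (at_right 0) (locally (g 0)) ->
  filterlim (fun t => f t + g t) (at_right 0) (locally (f 0 + g 0)).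
Proof. intros Hf Hg. exact (filterlim_comp_2 f g Rplus Hf Hg (filterlim_plus (V:=R_NormedModule) (f 0) (g 0))). Qed.
Lemma RC_mult f g : filterlim f (at_right 0) (locally (f 0)) -> filterlim g (at_right 0) (locally (g 0)) ->
  filterlim (fun t => f t * g t) (at_right 0) (locally (f 0 * g 0)).
Proof. intros Hf Hg. exact (filterlim_comp_2 f g Rmult Hf Hg (filterlim_mult (K:=R_AbsRing) (f 0) (g 0))). Qed.
Lemma RC_opp f : filterlim f (at_right 0) (locally (f 0)) ->
  filterlim (fun t => - f t) (at_right 0) (locally (- f 0)).
Proof. intros Hf. exact (filterlim_comp _ _ _ f Ropp _ _ _ Hf (filterlim_opp (V:=R_NormedModule) (f 0))). Qed.
Definition zr (r : mat) := (Re (r 0%nat 1%nat) + Re (r 1%nat 0%nat))/2.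
Definition zi (r : mat) := (Im (r 0%nat 1%nat) - Im (r 1%nat 0%nat))/2.
Ltac crunch := unfold lindblad_rhs, madd, msub, mscale, mmul, comm, Ham, dissip, Ix, Iy, Iz, sminus, splus, sx, sy, sz, zr, zi;
  unfold Cplus, Cminus, Cmult, Copp, RtoC, Ci, Re, Im; simpl; field.
Lemma rhs00 om ex ey dg g0 t r : Re (lindblad_rhs om ex ey dg g0 t r 0%nat 0%nat) =
  -(ex t * zi r + ey t * zr r) - (g0 + dg t) * Re (r 0%nat 0%nat).
Proof. crunch. Qed.
Lemma rhs11 om ex ey dg g0 t r : Re (lindblad_rhs om ex ey dg g0 t r 1%nat 1%nat) =
  (ex t * zi r + ey t * zr r) + (g0 + dg t) * Re (r 0%nat 0%nat).
Proof. crunch. Qed.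
Lemma rhszr om ex ey dg g0 t r :
  (Re (lindblad_rhs om ex ey dg g0 t r 0%nat 1%nat) + Re (lindblad_rhs om ex ey dg g0 t r 1%nat 0%nat))/2 =
  (1 + om t) * zi r - ey t * (Re (r 1%nat 1%nat) - Re (r 0%nat 0%nat))/2 - (g0 + dg t) * zr r / 2.
Proof. crunch. Qed.
Lemma rhszi om ex ey dg g0 t r :
  (Im (lindblad_rhs om ex ey dg g0 t r 0%nat 1%nat) - Im (lindblad_rhs om ex ey dg g0 t r 1%nat 0%nat))/2 =
  - (1 + om t) * zr r - ex t * (Re (r 1%nat 1%nat) - Re (r 0%nat 0%nat))/2 - (g0 + dg t) * zi r / 2.
Proof. crunch. Qed.

Lemma deq (f : R -> R) (t a b : R) : is_derive f t a -> a = b -> is_derive f t b.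
Proof. intros H ->; exact H. Qed.

Lemma d_half_plus (f g : R -> R) (t a b : R) : is_derive f t a -> is_derive g t b ->
  is_derive (fun s => (f s + g s) / 2) t ((a + b) / 2).
Proof. intros Hf Hg.
  apply (is_derive_ext (fun s => /2 * (plus (f s) (g s)))). { intros s. unfold plus; simpl. unfold Rdiv; ring. }
  eapply deq. apply (is_derive_scal (fun s => plus (f s) (g s))). apply (is_derive_plus f g); eauto.
  unfold plus; simpl. unfold Rdiv; ring. Qed.

Lemma d_half_minus (f g : R -> R) (t a b : R) : is_derive f t a -> is_derive g t b ->
  is_derive (fun s => (f s - g s) / 2) t ((a - b) / 2).
Proof. intros Hf Hg.
  apply (is_derive_ext (fun s => /2 * (minus (f s) (g s)))). { intros s. unfold minus, plus, opp; simpl. unfold Rdiv; ring. }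
  eapply deq. apply (is_derive_scal (fun s => minus (f s) (g s))). apply (is_derive_minus f g); eauto.
  unfold minus, plus, opp; simpl. unfold Rdiv; ring. Qed.

Lemma d_plus (f g : R -> R) (t a b : R) : is_derive f t a -> is_derive g t b ->
  is_derive (fun s => f s + g s) t (a + b).
Proof. intros Hf Hg. exact (is_derive_plus f g t a b Hf Hg). Qed.

Lemma d_minus (f g : R -> R) (t a b : R) : is_derive f t a -> is_derive g t b ->
  is_derive (fun s => f s - g s) t (a - b).
Proof. intros Hf Hg. eapply deq. exact (is_derive_minus f g t a b Hf Hg).
  unfold minus, plus, opp; simpl. ring. Qed.

Lemma d_mult (f g : R -> R) (t a b : R) : is_derive f t a -> is_derive g t b ->
  is_derive (fun s => f s * g s) t (a * g t + f t * b).
Proof. intros Hf Hg. eapply deq. exact (is_derive_mult f g t a b Hf Hg Rmult_comm).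
  unfold mult, plus; simpl. ring. Qed.

Lemma alg ex ey zr zi x g G eps S : 0 < eps -> 0 <= g <= G -> ex^2 + ey^2 <= eps^2 ->
  0 <= x * (1 - x) - (zr * zr + zi * zi) -> 0 <= S -> S * S = 4 * eps^2 + G^2 ->
  ex * zi + ey * zr + g * x <= (G + S) / 2.
Proof.
  intros He Hg Hexy HD HS HS2.
  assert (Hxx : 0 <= x * (1 - x)) by nra.
  assert (Hx : 0 <= x <= 1).
  { split; destruct (Rle_or_lt 0 x); destruct (Rle_or_lt x 1); nra. }
  set (s := ex * zi + ey * zr).
  assert (Hs : s * s <= eps^2 * (x * (1 - x))).
  { assert (s * s <= (ex^2 + ey^2) * (zr*zr + zi*zi)).
    { assert (0 <= (ex * zr - ey * zi) * (ex * zr - ey * zi)) by apply Rle_0_sqr.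
      assert (E : (ex^2 + ey^2) * (zr*zr + zi*zi) - s * s = (ex * zr - ey * zi) * (ex * zr - ey * zi)) by (unfold s; ring).
      lra. }
    assert (0 <= zr*zr + zi*zi) by nra.
    assert ((ex^2 + ey^2) * (zr*zr + zi*zi) <= eps^2 * (zr*zr + zi*zi)) by (apply Rmult_le_compat_r; lra).
    assert (eps^2 * (zr*zr + zi*zi) <= eps^2 * (x * (1 - x))) by (apply Rmult_le_compat_l; nra).
    lra. }
  set (u := 2 * s). set (v := 2 * x - 1).
  assert (Huv : u * u + eps^2 * (v * v) <= eps^2).
  { assert (E : eps^2 - (u * u + eps^2 * (v * v)) = 4 * (eps^2 * (x * (1 - x)) - s * s)) by (unfold u, v; ring). lra. }
  assert (Hcs : eps^2 * ((u + G * v) * (u + G * v)) <= (u*u + eps^2 * (v*v)) * (eps^2 + G^2)).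
  { assert (0 <= (u * G - eps^2 * v) * (u * G - eps^2 * v)) by apply Rle_0_sqr.
    assert (E : (u*u + eps^2 * (v*v)) * (eps^2 + G^2) - eps^2 * ((u + G * v) * (u + G * v)) = (u * G - eps^2 * v) * (u * G - eps^2 * v)) by ring.
    lra. }
  assert (H2 : (u + G * v) * (u + G * v) <= eps^2 + G^2).
  { assert (eps^2 * ((u + G * v) * (u + G * v)) <= eps^2 * (eps^2 + G^2)).
    { assert (0 <= eps^2 + G^2) by nra. nra. }
    assert (0 < eps^2) by nra. nra. }
  assert (u + G * v <= S) by nra.
  assert (g * x <= G * x) by nra.
  unfold u, v in *. lra.
Qed.

Theorem theorem2 (p0 eps om gamma0 gamma : R)
  (omt ex ey dgam : R -> R) (rho : R -> mat) :
  0 < p0 < 1 -> 0 < eps -> 0 <= om -> 0 <= gamma -> gamma <= gamma0 ->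
  (forall t, 0 <= t -> Rabs (omt t) <= om) ->
  (forall t, 0 <= t -> sqrt (ex t ^ 2 + ey t ^ 2) <= eps) ->
  (forall t, 0 <= t -> Rabs (dgam t) <= gamma) ->
  solves_master omt ex ey dgam gamma0 rho ->
  forall t, 0 <= t <= Ta p0 eps gamma0 gamma ->
    1 - p0 <= Re (rho t 0%nat 0%nat) /\ Re (rho t 1%nat 1%nat) <= p0.
Proof.
  intros Hp0 Heps Hom Hgam Hgg Homt Hexy Hdg [Hinit [Hcont Hder]] t Ht.
  set (x := fun s => Re (rho s 0%nat 0%nat)).
  set (y := fun s => Re (rho s 1%nat 1%nat)).
  set (Z1 := fun s => zr (rho s)).
  set (Z2 := fun s => zi (rho s)).
  set (g := fun s => gamma0 + dgam s).
  set (dx := fun s => -(ex s * Z2 s + ey s * Z1 s) - g s * x s).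
  set (dy := fun s => (ex s * Z2 s + ey s * Z1 s) + g s * x s).
  set (dZ1 := fun s => (1 + omt s) * Z2 s - ey s * (y s - x s)/2 - g s * Z1 s / 2).
  set (dZ2 := fun s => - (1 + omt s) * Z1 s - ex s * (y s - x s)/2 - g s * Z2 s / 2).
  assert (Dx : forall s, 0 < s -> is_derive x s (dx s)).
  { intros s Hs. destruct (Hder s Hs 0%nat 0%nat ltac:(lia) ltac:(lia)) as [H _].
    eapply deq; [exact H|]. unfold dx, x, g, Z1, Z2. rewrite rhs00. reflexivity. }
  assert (Dy : forall s, 0 < s -> is_derive y s (dy s)).
  { intros s Hs. destruct (Hder s Hs 1%nat 1%nat ltac:(lia) ltac:(lia)) as [H _].
    eapply deq; [exact H|]. unfold dy, x, g, Z1, Z2. rewrite rhs11. reflexivity. }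
  assert (DZ1 : forall s, 0 < s -> is_derive Z1 s (dZ1 s)).
  { intros s Hs. destruct (Hder s Hs 0%nat 1%nat ltac:(lia) ltac:(lia)) as [H1 _].
    destruct (Hder s Hs 1%nat 0%nat ltac:(lia) ltac:(lia)) as [H2 _].
    eapply deq; [exact (d_half_plus _ _ _ _ _ H1 H2)|]. unfold dZ1, x, y, g, Z1, Z2. rewrite rhszr. reflexivity. }
  assert (DZ2 : forall s, 0 < s -> is_derive Z2 s (dZ2 s)).
  { intros s Hs. destruct (Hder s Hs 0%nat 1%nat ltac:(lia) ltac:(lia)) as [_ H1].
    destruct (Hder s Hs 1%nat 0%nat ltac:(lia) ltac:(lia)) as [_ H2].
    eapply deq; [exact (d_half_minus _ _ _ _ _ H1 H2)|]. unfold dZ2, x, y, g, Z1, Z2. rewrite rhszi. reflexivity. }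
  assert (Cx : filterlim x (at_right 0) (locally (x 0))) by exact (proj1 (Hcont 0%nat 0%nat ltac:(lia) ltac:(lia))).
  assert (Cy : filterlim y (at_right 0) (locally (y 0))) by exact (proj1 (Hcont 1%nat 1%nat ltac:(lia) ltac:(lia))).
  assert (CZ1 : filterlim Z1 (at_right 0) (locally (Z1 0))).
  { exact (RC_mult _ (fun _ => /2) (RC_plus _ _ (proj1 (Hcont 0%nat 1%nat ltac:(lia) ltac:(lia)))
             (proj1 (Hcont 1%nat 0%nat ltac:(lia) ltac:(lia)))) (filterlim_const (/2))). }
  assert (CZ2 : filterlim Z2 (at_right 0) (locally (Z2 0))).
  { exact (RC_mult _ (fun _ => /2) (RC_plus _ _ (proj2 (Hcont 0%nat 1%nat ltac:(lia) ltac:(lia)))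
             (RC_opp _ (proj2 (Hcont 1%nat 0%nat ltac:(lia) ltac:(lia))))) (filterlim_const (/2))). }
  assert (Ix0 : x 0 = 1) by (unfold x; rewrite Hinit; reflexivity).
  assert (Iy0 : y 0 = 0) by (unfold y; rewrite Hinit; reflexivity).
  assert (IZ10 : Z1 0 = 0) by (unfold Z1, zr; rewrite Hinit; simpl; field).
  assert (IZ20 : Z2 0 = 0) by (unfold Z2, zi; rewrite Hinit; simpl; field).
  set (G := gamma0 + gamma).
  assert (Hgb : forall s, 0 <= s -> 0 <= g s <= G).
  { intros s Hs. pose proof (Hdg s Hs) as Q. apply Rabs_le_between in Q. unfold g, G. lra. }
  assert (Htr : forall s, 0 <= s -> x s + y s = 1).
  { intros s Hs.
    assert (Cs : filterlim (fun t => x t + y t) (at_right 0) (locally (x 0 + y 0))) by exact (RC_plus _ _ Cx Cy).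
    assert (R1 := rc_eps _ 0 Cs).
    assert (R2 := rc_eps _ 0 (RC_opp _ Cs)).
    pose proof (L1 (fun t => x t + y t) (fun t => dx t + dy t) 0) as A.
    pose proof (L1 (fun t => - (x t + y t)) (fun t => - (dx t + dy t)) 0) as B.
    assert (A1 : x s + y s <= x 0 + y 0 + 0 * s).
    { apply A; auto. - intros q Hq. apply d_plus; auto. - intros q Hq. unfold dx, dy. lra. }
    assert (B1 : - (x s + y s) <= - (x 0 + y 0) + 0 * s).
    { apply B; auto. - intros q Hq. apply (is_derive_opp (fun t => x t + y t)). apply d_plus; auto.
      - intros q Hq. unfold dx, dy. lra. }
    lra. }
  set (D := fun s => x s * y s - (Z1 s * Z1 s + Z2 s * Z2 s)).
  set (dD := fun s => - g s * D s + g s * (x s * x s)).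
  assert (DD : forall s, 0 < s -> is_derive D s (dD s)).
  { intros s Hs. eapply deq.
    - apply d_minus; [apply d_mult; auto| apply d_plus; apply d_mult; auto].
    - unfold dD, D, dx, dy, dZ1, dZ2. field. }
  assert (CD : filterlim D (at_right 0) (locally (D 0))).
  { exact (RC_plus _ _ (RC_mult _ _ Cx Cy) (RC_opp _ (RC_plus _ _ (RC_mult _ _ CZ1 CZ1) (RC_mult _ _ CZ2 CZ2)))). }
  assert (HD : forall s, 0 <= s -> 0 <= D s).
  { apply (barrier D dD DD (rc_eps _ 0 CD)).
    - unfold D. rewrite Ix0, Iy0, IZ10, IZ20. lra.
    - intros s Hs HDs. unfold dD. pose proof (Hgb s ltac:(lra)). nra. }
  set (S := sqrt (4 * eps ^ 2 + G ^ 2)).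
  assert (HS0 : 0 <= S) by apply sqrt_pos.
  assert (HS2 : S * S = 4 * eps ^ 2 + G ^ 2) by (apply sqrt_sqrt; nra).
  assert (Hdy : forall s, 0 < s -> dy s <= (G + S) / 2).
  { intros s Hs. unfold dy. apply alg with (eps := eps); auto.
    - apply Hgb; lra.
    - pose proof (Hexy s ltac:(lra)) as Q.
      pose proof (sqrt_pos (ex s ^ 2 + ey s ^ 2)).
      pose proof (sqrt_sqrt (ex s ^ 2 + ey s ^ 2) ltac:(nra)). nra.
    - pose proof (HD s ltac:(lra)) as Q. pose proof (Htr s ltac:(lra)).
      unfold D in Q. replace (1 - x s) with (y s) by lra. exact Q. }
  assert (Yb : y t <= y 0 + (G + S) / 2 * t).
  { apply (L1 y dy ((G + S) / 2) Dy Hdy (rc_eps _ 0 Cy)). lra. }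
  assert (HTa : Ta p0 eps gamma0 gamma = 2 * p0 / (S + G)) by reflexivity.
  assert (HG : 0 <= G) by (unfold G; lra).
  assert (HSp : 0 < S + G).
  { assert (0 < S); [|lra]. unfold S. apply sqrt_lt_R0. nra. }
  assert (Yp : y t <= p0).
  { rewrite Iy0 in Yb. destruct Ht as [Ht0 Ht1]. rewrite HTa in Ht1.
    assert ((G + S) / 2 * t <= (G + S) / 2 * (2 * p0 / (S + G))) by (apply Rmult_le_compat_l; lra).
    replace ((G + S) / 2 * (2 * p0 / (S + G))) with p0 in H by (field; lra). lra. }
  pose proof (Htr t (proj1 Ht)). unfold x, y in *. split; lra.
Qed.
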